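(* Consider the coordination game and let $\mathcal Z$ be the set of $z\in\{0,\tfrac1n,\dots,1\}$ such that $z=F_c\!\left(\frac{n}{n-1}(z-\epsilon)\right)$ for every $\epsilon\in(0,\tfrac1n]$. Then for each $z\in\mathcal Z$ there is exactly one Nash equilibrium $x^*$ with $z(x^* )=z$, and the number of Nash equilibria satisfies $|\mathcal N|=|\mathcal Z|$, with $1\le|\mathcal Z|\le n+1$.
   Context: Let $\mathcal V$ be a finite set of $n\ge2$ agents, all coordinating. Given real weights $d_i$, the coordination game has action set $\{-1,+1\}$, configuration space $\mathcal X=\{-1,+1\}^{\mathcal V}$ and utilities $u_i(x)=\sum_{j\neq i}x_ix_j-d_ix_i$. A (pure) Nash equilibrium is an $x\in\mathcal X$ with $u_i(x)\ge u_i(y_i,x_{-i})$ for all $i$ and $y_i\in\{-1,+1\}$; $\mathcal N$ denotes the set of Nash equilibria. Thresholds: $r_i=\tfrac12+\tfrac{d_i}{2(n-1)}$. For $x\in\mathcal X$, $z(x)=\frac1n|\{i: x_i=+1\}|$. The threshold CDF is $F_c(t)=\frac1n|\{i\in\mathcal V: r_i\le t\}|$, $t\in\mathbb R$. *)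

(* Defs.v *)
(* Agents are 'I_n; action +1 is encoded as true, -1 as false. *)
From HB Require Import structures.
From mathcomp Require Import all_boot all_order all_algebra.
Set Implicit Arguments. Unset Strict Implicit. Unset Printing Implicit Defensive.
From Stdlib Require Import ClassicalEpsilon.
Import Order.TTheory GRing.Theory Num.Theory.
Local Open Scope ring_scope.

Definition act (R : nzRingType) (b : bool) : R := if b then 1 else -1.

Definition util (R : nzRingType) (n : nat) (d : 'I_n -> R)
    (i : 'I_n) (x : {ffun 'I_n -> bool}) : R :=
  \sum_(j < n | j != i) act R (x i) * act R (x j) - d i * act R (x i).

Definition deviate (n : nat) (x : {ffun 'I_n -> bool}) (i : 'I_n) (y : bool)
    : {ffun 'I_n -> bool} :=
  [ffun j => if j == i then y else x j].

Definition is_nash (R : realDomainType) (n : nat) (d : 'I_n -> R)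
    (x : {ffun 'I_n -> bool}) : bool :=
  [forall i : 'I_n, forall y : bool, util d i (deviate x i y) <= util d i x].

Definition nash_set (R : realDomainType) (n : nat) (d : 'I_n -> R)
    : {set {ffun 'I_n -> bool}} := [set x | is_nash d x].

Definition thr (R : realFieldType) (n : nat) (d : 'I_n -> R) (i : 'I_n) : R :=
  2^-1 + d i / (2 * (n%:R - 1)).

Definition Fc (R : realFieldType) (n : nat) (d : 'I_n -> R) (t : R) : R :=
  #|[set i : 'I_n | thr d i <= t]|%:R / n%:R.

Definition zfrac (R : realFieldType) (n : nat) (x : {ffun 'I_n -> bool}) : R :=
  #|[set i : 'I_n | x i]|%:R / n%:R.

Definition pbool (P : Prop) : bool :=
  if excluded_middle_informative P then true else false.

(* The set Z, with z = k/n indexed by k : 'I_(n+1) *)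
Definition Zset (R : realFieldType) (n : nat) (d : 'I_n -> R) : {set 'I_n.+1} :=
  [set k : 'I_n.+1 | pbool (forall eps : R, 0 < eps -> eps <= n%:R^-1 ->
       ((k%:R / n%:R : R) = Fc d (n%:R / (n%:R - 1) * (k%:R / n%:R - eps)))) ].

(* Main.v *)
Require Import Defs.
From HB Require Import structures.
From mathcomp Require Import all_boot all_order all_algebra.
From mathcomp Require Import ring lra zify.
From Stdlib Require Import ClassicalEpsilon.
Set Implicit Arguments. Unset Strict Implicit.
Import Order.TTheory GRing.Theory Num.Theory.
Local Open Scope ring_scope.

Lemma act_neg (R : nzRingType) b : act R (~~ b) = - act R b.
Proof. by case: b; rewrite /act ?opprK. Qed.

Lemma util_dev (R : realDomainType) n (d : 'I_n -> R) i x y :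
  util d i (deviate x i y) = act R y * (\sum_(j < n | j != i) act R (x j) - d i).
Proof.
rewrite /util /deviate -mulr_sumr mulrBr !ffunE eqxx (mulrC (d i)).
congr (_ * _ - _); apply: eq_bigr => j /negbTE ji; by rewrite ffunE ji.
Qed.

Lemma util_x (R : realDomainType) n (d : 'I_n -> R) i x :
  util d i x = act R (x i) * (\sum_(j < n | j != i) act R (x j) - d i).
Proof. by rewrite /util -mulr_sumr mulrBr (mulrC (d i)). Qed.

Lemma sum_act (R : realDomainType) n (x : {ffun 'I_n -> bool}) :
  \sum_(j < n) act R (x j) = 2 * #|[set i | x i]|%:R - n%:R.
Proof.
have -> : \sum_(j < n) act R (x j) = \sum_(j < n) (2 * (x j)%:R - 1).
  by apply: eq_bigr => j _; case: (x j); rewrite /act /=; rewrite ?mulr0 ?mulr1; ring.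
rewrite sumrB -mulr_sumr sumr_const card_ord; congr (2 * _ - _).
rewrite (bigID (fun j => x j)) /= [X in _ + X]big1 ?addr0; last by move=> j /negbTE ->.
rewrite (eq_bigr (fun _ => 1)); last by move=> j ->.
rewrite sumr_const; congr (_ *+ _); apply: eq_card => j; by rewrite inE.
Qed.

Definition mcnt n (x : {ffun 'I_n -> bool}) := #|[set i | x i]|.

Lemma nashP (R : realDomainType) n (d : 'I_n -> R) x :
  is_nash d x <-> forall i, if x i then d i <= 2 * (mcnt x)%:R - n%:R - 1
                            else 2 * (mcnt x)%:R - n%:R + 1 <= d i.
Proof.
have HS i : \sum_(j < n | j != i) act R (x j) = 2 * (mcnt x)%:R - n%:R - act R (x i).
  rewrite -(sum_act R x) [in RHS](bigD1 i) //=. ring.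
split.
  move=> /forallP H i; move: (H i) => /forallP /(_ (~~ x i)).
  rewrite util_dev util_x act_neg HS.
  by case: (x i); rewrite /act; lra.
move=> H; apply/forallP => i; apply/forallP => y.
rewrite util_dev util_x HS; move: (H i).
by case: (x i); case: y; rewrite /act; lra.
Qed.

Lemma thr_le (R : realFieldType) n (d : 'I_n -> R) i (k : nat) eps : (2 <= n)%N ->
  (thr d i <= n%:R / (n%:R - 1) * (k%:R / n%:R - eps)) =
  (d i <= 2 * k%:R - n%:R + 1 - 2 * n%:R * eps).
Proof.
move=> n2.
have hn : (2 : R) <= n%:R by rewrite (ler_nat R 2 n).
have c0 : n%:R - 1 != 0 :> R by rewrite subr_eq0; apply/eqP => h; rewrite h in hn; lra.
have n0 : n%:R != 0 :> R by apply/eqP => h; rewrite h in hn; lra.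
have cp : 0 < 2 * (n%:R - 1) :> R by lra.
rewrite -subr_le0 -[in RHS]subr_le0.
have -> : thr d i - n%:R / (n%:R - 1) * (k%:R / n%:R - eps) =
   (d i - (2 * k%:R - n%:R + 1 - 2 * n%:R * eps)) * (2 * (n%:R - 1))^-1.
  rewrite /thr; field; by rewrite c0 n0.
by rewrite pmulr_lle0 // invr_gt0.
Qed.

Definition Cset (R : realFieldType) n (d : 'I_n -> R) (k : nat) (dl : R) :=
  [set i | d i <= 2 * k%:R - n%:R + 1 - dl].

Lemma ZsetP (R : realFieldType) n (d : 'I_n -> R) (k : 'I_n.+1) : (2 <= n)%N ->
  k \in Zset d <-> forall dl : R, 0 < dl -> dl <= 2 -> #|Cset d k dl| = k.
Proof.
move=> n2.
have hn : (2 : R) <= n%:R by rewrite (ler_nat R 2 n).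
have n0 : n%:R != 0 :> R by apply/eqP => h; rewrite h in hn; lra.
have np : 0 < n%:R :> R by lra.
have E t (m : nat) : (k%:R / n%:R = Fc d t) <-> #|[set i | thr d i <= t]| = k.
  rewrite /Fc; split.
    move=> h; have := congr1 (fun z => z * n%:R) h; rewrite !divfK //.
    by move/eqP; rewrite eqr_nat => /eqP ->.
  by move=> ->.
have CE eps : [set i | thr d i <= n%:R / (n%:R - 1) * (k%:R / n%:R - eps)] =
              Cset d k (2 * n%:R * eps).
  by apply/setP => i; rewrite !inE thr_le // opprD addrA.
rewrite inE /pbool; case: excluded_middle_informative => H; split => //.
- move=> _ dl dl0 dl2.
  have h := H (dl / (2 * n%:R)).
  move: h; move/(_ _ _)/(E _ 0%N); rewrite CE.
  have -> : 2 * n%:R * (dl / (2 * n%:R)) = dl by field.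
  apply.
    by rewrite divr_gt0 // mulr_gt0.
  by rewrite ler_pdivrMr ?mulr_gt0 // mulrCA mulVf // mulr1.
- move=> h; exfalso; apply: H => eps e0 e1; apply/(E _ 0%N).
  rewrite CE; apply: h; first by rewrite mulr_gt0 // mulr_gt0.
  have : eps * n%:R <= 1 by rewrite -ler_pdivlMr // mul1r.
  nra.
Qed.

Lemma mcnt_le n (x : {ffun 'I_n -> bool}) : (mcnt x <= n)%N.
Proof. by apply: leq_trans (max_card _) _; rewrite card_ord. Qed.

Definition xof (R : realFieldType) n (d : 'I_n -> R) (k : nat) : {ffun 'I_n -> bool} :=
  [ffun i => d i <= 2 * k%:R - n%:R - 1].

Lemma nash_form (R : realFieldType) n (d : 'I_n -> R) x :
  is_nash d x -> x = xof d (mcnt x).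
Proof.
move/nashP => H; apply/ffunP => i; rewrite ffunE; move: (H i).
case: (x i) => h; first by rewrite h.
apply/esym/negbTE; rewrite -ltNge; lra.
Qed.

Lemma nash_Z (R : realFieldType) n (d : 'I_n -> R) x : (2 <= n)%N ->
  is_nash d x -> (inord (mcnt x) : 'I_n.+1) \in Zset d.
Proof.
move=> n2 /nashP H; apply/ZsetP => // dl dl0 dl2.
rewrite inordK ?ltnS ?mcnt_le // /mcnt.
apply: eq_card => i; rewrite !inE; move: (H i); case: (x i) => h.
  apply/idP; lra.
apply/negbTE; rewrite -ltNge; lra.
Qed.

Lemma Z_nash (R : realFieldType) n (d : 'I_n -> R) (k : 'I_n.+1) : (2 <= n)%N ->
  k \in Zset d -> is_nash d (xof d k) /\ mcnt (xof d k) = k.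
Proof.
move=> n2 /ZsetP -/(_ n2) H.
have Hm : mcnt (xof d k) = k.
  apply: etrans (H 2 _ _) => //; apply: eq_card => i; rewrite !inE ffunE.
  by have -> : 2 * k%:R - n%:R + 1 - 2 = 2 * k%:R - n%:R - 1 :> R by ring.
split => //; apply/nashP => i; rewrite Hm ffunE.
case: ifP => // /negbT; rewrite -ltNge => hi.
rewrite leNgt; apply/negP => hi2.
pose dl := 2 * k%:R - n%:R + 1 - d i.
have := H dl; rewrite /dl; have -> : 0 < 2 * k%:R - n%:R + 1 - d i by lra.
have -> : 2 * k%:R - n%:R + 1 - d i <= 2 by lra.
move=> /(_ isT isT) Hc.
have sub : i |: [set j | xof d k j] \subset Cset d k (2 * k%:R - n%:R + 1 - d i).
  apply/subsetP => j; rewrite !inE ffunE => /orP [/eqP -> | hj]; first lra.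
  lra.
have := subset_leq_card sub; rewrite Hc cardsU1 inE ffunE.
have -> : (d i <= 2 * k%:R - n%:R - 1) = false by apply/negbTE; rewrite -ltNge.
by rewrite -/(mcnt _) Hm /= ltnn.
Qed.

Lemma exists_nash (R : realFieldType) n (d : 'I_n -> R) :
  exists x, is_nash d x.
Proof.
pose A (k : nat) := [set i | d i <= 2 * k%:R - n%:R - 1].
pose B (k : nat) := [set i | d i < 2 * k%:R - n%:R + 1].
have AB k : A k \subset B k by apply/subsetP => i; rewrite !inE => h; lra.
have BA k : B k \subset A k.+1.
  by apply/subsetP => i; rewrite !inE -natr1 => h; lra.
have ex : exists k, (#|B k| <= k)%N.
  by exists n; apply: leq_trans (max_card _) _; rewrite card_ord.
case: (ex_minnP ex) => k0 hk0 hmin.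
have [gA gB] : #|A k0| = k0 /\ #|B k0| = k0.
  move: hk0 hmin; case: k0 => [|k] hk hmin.
    have := subset_leq_card (AB 0%N); move: hk; lia.
  have hk' : (k < #|B k|)%N by rewrite ltnNge; apply/negP => /hmin; rewrite ltnn.
  have := subset_leq_card (BA k); have := subset_leq_card (AB k.+1).
  lia.
have eqAB : A k0 =i B k0 by apply/subset_cardP; rewrite ?gA ?gB.
exists (xof d k0); apply/nashP => i.
have -> : mcnt (xof d k0) = k0.
  by apply: etrans gA; apply: eq_card => j; rewrite !inE ffunE.
rewrite ffunE; case: ifP => // /negbT hi.
have : i \notin B k0 by rewrite -eqAB inE.
by rewrite inE -leNgt.
Qed.

Theorem mainTheorem4 (R : realFieldType) (n : nat) (d : 'I_n -> R) :
  (2 <= n)%N ->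
  (forall k : 'I_n.+1, k \in Zset d ->
     exists! x : {ffun 'I_n -> bool},
       x \in nash_set d /\ zfrac R x = k%:R / n%:R) /\
  #|nash_set d| = #|Zset d| /\
  (1 <= #|Zset d| <= n.+1)%N.
Proof.
move=> n2.
have n0 : n%:R != 0 :> R by rewrite pnatr_eq0 -lt0n; apply: leq_trans n2.
have zf (x : {ffun 'I_n -> bool}) : zfrac R x = (mcnt x)%:R / n%:R by [].
split.
  move=> k kZ; have [Hn Hm] := Z_nash n2 kZ.
  exists (xof d k); split.
    by split; [rewrite inE | rewrite zf Hm].
  move=> y [yN yz]; rewrite inE in yN.
  have my : mcnt y = k.
    move: yz; rewrite zf => h; have := congr1 (fun z => z * n%:R) h.
    by rewrite !divfK // => /eqP; rewrite eqr_nat => /eqP.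
  by rewrite (nash_form yN) my.
have E : Zset d = [set (inord (mcnt x) : 'I_n.+1) | x in nash_set d].
  apply/setP => k; apply/idP/imsetP.
    move=> kZ; have [Hn Hm] := Z_nash n2 kZ.
    by exists (xof d k); rewrite ?inE // Hm inord_val.
  by move=> [x xN ->]; apply: nash_Z => //; rewrite inE in xN.
split.
  rewrite E card_in_imset // => x y xN yN /(congr1 val) /=.
  rewrite !inordK ?ltnS ?mcnt_le // => h.
  rewrite inE in xN; rewrite inE in yN.
  by rewrite (nash_form xN) (nash_form yN) h.
apply/andP; split.
  have [x xN] := exists_nash d; apply/card_gt0P; exists (inord (mcnt x)).
  exact: nash_Z.
by apply: leq_trans (max_card _) _; rewrite card_ord.
Qed.
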